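(* Let $I=\{T,L,R\}$ with the discrete metric and consider the initial chain $I\xrightarrow{!}FI\xrightarrow{F!}F^2I\xrightarrow{F^2!}\cdots$ of the functor $F$ on $\mathbf{Met_3}^{C}$, where $!\colon I\to FI$ is the unique morphism ($T\mapsto a\otimes T$, $L\mapsto b\otimes L$, $R\mapsto c\otimes R$). The colimit of this chain in $\mathbf{Met_3}^{C}$ is $G_\rho=(G,d_{disc})$, the colimit $G$ of the same chain in $\mathbf{Set_3}$ equipped with the discrete metric; moreover the colimit maps $F^nI\to G_\rho$ are the same as the colimit maps $F^nI\to G$ in $\mathbf{Set_3}$.
   Context: A tripointed set is a set with three distinct distinguished points $T,L,R$; $\mathbf{Set_3}$ is the category of tripointed sets with maps preserving $T,L,R$. A tripointed metric space is a tripointed set with a metric bounded by $1$ in which the three distinguished points have pairwise distance $1$. $\mathbf{Met_3}^{C}$ is the category of tripointed metric spaces with continuous maps preserving $T,L,R$. Let $M=\{a,b,c\}$. The functor $F=M\otimes-$: for a tripointed set $X$, $M\otimes X$ is the quotient of $M\times X$ (three copies of $X$) by the equivalence relation generated by $(b,T)\sim(a,L)$, $(a,R)\sim(c,T)$, $(c,L)\sim(b,R)$, elements written $m\otimes x$, distinguished points $a\otimes T$, $b\otimes L$, $c\otimes R$; on morphisms $(M\otimes f)(m\otimes x)=m\otimes f(x)$. In the metric setting $M\times X$ carries the metric $d((m,x),(n,y))=\tfrac12 d(x,y)$ if $m=n$ and $1$ otherwise, and $M\otimes X$ carries the quotient metric. The discrete metric is $d(x,y)=1$ for $x\neq y$.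 *)

(* Defs.v *)
From HB Require Import structures.
From mathcomp Require Import all_boot all_order all_algebra.
From mathcomp Require Import boolp classical_sets reals.
From Stdlib Require Import Relations.
Set Implicit Arguments. Unset Strict Implicit. Unset Printing Implicit Defensive.
Import Order.TTheory GRing.Theory Num.Theory.
Local Open Scope classical_set_scope.
Local Open Scope ring_scope.

Record tpset := TPSet { scar :> Type; pT : scar; pL : scar; pR : scar }.

Definition is_set3 (X : tpset) : Prop :=
  [/\ pT X <> pL X, pL X <> pR X & pT X <> pR X].

Definition hom3 (X Y : tpset) (f : X -> Y) : Prop :=
  [/\ f (pT X) = pT Y, f (pL X) = pL Y & f (pR X) = pR Y].

Inductive M := ma | mb | mc.

Section Tensor.
Variable X : tpset.

Definition glue (p q : M * X) : Prop :=
  [\/ p = (mb, pT X) /\ q = (ma, pL X),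
      p = (ma, pR X) /\ q = (mc, pT X) |
      p = (mc, pL X) /\ q = (mb, pR X)].

Definition gequiv : M * X -> M * X -> Prop := clos_refl_sym_trans _ glue.

Definition cls (p : M * X) : set (M * X) := [set q | gequiv p q].

Definition tcar : Type := {C : set (M * X) | exists p, C = cls p}.

Definition tel (m : M) (x : X) : tcar :=
  exist _ (cls (m, x)) (ex_intro _ (m, x) erefl).

Definition tens : tpset := TPSet (tel ma (pT X)) (tel mb (pL X)) (tel mc (pR X)).

End Tensor.

(* action of M (x) - on maps: (M (x) f)(m (x) x) = m (x) f(x), computed on a
   (chosen) representative of the class *)
Definition trep (X : tpset) (C : tcar X) : M * X := projT1 (cid (proj2_sig C)).

Definition tmap (X Y : tpset) (f : X -> Y) (C : tcar X) : tcar Y :=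
  @tel Y (trep C).1 (f (trep C).2).

Section Met.
Variable R : realType.

Record tpmet := TPMet { mset :> tpset; mdist : mset -> mset -> R }.

Definition is_met3 (X : tpmet) : Prop :=
  [/\ (forall x y : X, mdist x y = 0 <-> x = y),
      (forall x y : X, mdist x y = mdist y x),
      (forall x y z : X, mdist x z <= mdist x y + mdist y z),
      (forall x y : X, mdist x y <= 1) &
      [/\ mdist (pT X) (pL X) = 1, mdist (pL X) (pR X) = 1 &
          mdist (pT X) (pR X) = 1]].

Definition mcont (X Y : tpmet) (f : X -> Y) : Prop :=
  forall (x : X) (e : R), 0 < e ->
    exists2 del : R, 0 < del &
      forall y : X, mdist x y < del -> mdist (f x) (f y) < e.

Definition ddisc (T : Type) (x y : T) : R := if pselect (x = y) then 0 else 1.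

Definition dMX (X : tpmet) (p q : M * X) : R :=
  if pselect (p.1 = q.1) then mdist p.2 q.2 / 2 else 1.

(* chains x ~ p0, (p0,q0), q0 ~ p1, (p1,q1), ..., (pn,qn), qn ~ y *)
Fixpoint qchain (X : tpset) (x y : M * X) (s : seq ((M * X) * (M * X))) : Prop :=
  match s with
  | [::] => False
  | [:: pq] => gequiv x pq.1 /\ gequiv pq.2 y
  | pq :: s' => gequiv x pq.1 /\ qchain pq.2 y s'
  end.

Definition qcost (X : tpmet) (s : seq ((M * X) * (M * X))) : R :=
  \sum_(pq <- s) dMX pq.1 pq.2.

Definition qdist (X : tpmet) (C D : tcar X) : R :=
  inf [set r | exists (x y : M * X) (s : seq ((M * X) * (M * X))),
         [/\ sval C x, sval D y, qchain x y s & r = qcost s]].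

Definition Fobj (X : tpmet) : tpmet := @TPMet (tens X) (@qdist X).

Inductive TLR := iT | iL | iR.
Definition Iset : tpset := TPSet iT iL iR.
Definition Imet : tpmet := @TPMet Iset (@ddisc TLR).

Fixpoint Fn (n : nat) : tpmet :=
  match n with 0 => Imet | n'.+1 => Fobj (Fn n') end.

Definition bang (x : Imet) : Fobj Imet :=
  match x with
  | iT => @tel Iset ma iT
  | iL => @tel Iset mb iL
  | iR => @tel Iset mc iR
  end.

Fixpoint chain (n : nat) : Fn n -> Fn n.+1 :=
  match n return Fn n -> Fn n.+1 with
  | 0 => bang
  | n'.+1 => @tmap (Fn n') (Fn n'.+1) (@chain n')
  end.

Definition discmet (G : tpset) : tpmet := @TPMet G (@ddisc G).

End Met.
Arguments chain {R} n.

(* Main.v *)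
Require Import Defs.
From HB Require Import structures.
From mathcomp Require Import all_boot all_order all_algebra.
From mathcomp Require Import boolp classical_sets reals.
Import Order.TTheory GRing.Theory Num.Theory.
Local Open Scope ring_scope.


From mathcomp Require Import lra.
From Stdlib Require Import Relations.
Local Open Scope classical_set_scope.
Local Open Scope ring_scope.

Set Implicit Arguments. Unset Strict Implicit.
Section Helpers.
Variable R : realType.

Lemma qcost_ge0 (X : tpmet R) (s : seq ((M * X) * (M * X))) :
  (forall x y : X, 0 <= mdist x y) -> 0 <= qcost s.
Proof.
move=> H; rewrite /qcost; apply: sumr_ge0 => pq _.
rewrite /dMX; case: pselect => ? /=; try by [];try lra.
by apply: divr_ge0 => //; apply: H.
Qed.

Lemma step_lb (X : tpmet R) c (p q : M * X) : 0 < c -> c <= 1 ->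
  (forall x y : X, 0 <= mdist x y /\ (x <> y -> c <= mdist x y)) ->
  p <> q -> c / 2 <= dMX p q.
Proof.
move=> c0 c1 H pq; rewrite /dMX; case: pselect => e /=; last by lra.
have ne : p.2 <> q.2.
  by move=> e2; apply: pq; case: p q e e2 {H} => [? ?] [? ?] /= -> ->.
have := (H p.2 q.2).2 ne; lra.
Qed.

Lemma chain_lb (X : tpmet R) c : 0 < c -> c <= 1 ->
  (forall x y : X, 0 <= mdist x y /\ (x <> y -> c <= mdist x y)) ->
  forall (s : seq ((M * X) * (M * X))) (x y : M * X),
  qchain x y s -> gequiv x y \/ c / 2 <= qcost s.
Proof.
move=> c0 c1 H; elim=> [|pq s IH] x y //=.
have nn : forall x y : X, 0 <= mdist x y by move=> a b; case: (H a b).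
have Hs := @qcost_ge0 _ s nn.
have Hpq : 0 <= dMX pq.1 pq.2.
  rewrite /dMX; case: pselect => ? /=; try by [];try lra.
  by apply: divr_ge0 => //.
have costE : qcost (pq :: s) = dMX pq.1 pq.2 + qcost s.
  by rewrite /qcost big_cons.
case: s IH Hs costE => [|pq' s'] IH Hs costE.
  move=> [h1 h2].
  case: (pselect (pq.1 = pq.2)) => e.
    left; apply: rst_trans h2; by rewrite -e.
  right; rewrite costE; have := step_lb c0 c1 H e; rewrite /qcost big_nil; lra.
move=> [h1 h2]; case: (IH _ _ h2) => [h3|h3].
  case: (pselect (pq.1 = pq.2)) => e.
    left; apply: rst_trans h1 _; by rewrite e.
  right; rewrite costE; have := step_lb c0 c1 H e; lra.
right; rewrite costE; lra.
Qed.

Lemma tcar_eq (X : tpset) (C D : tcar X) : sval C = sval D -> C = D.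
Proof.
case: C D => [C pC] [D pD] /= e; subst D; congr exist; exact: Prop_irrelevance.
Qed.

Lemma gequiv_sym (X : tpset) (x y : M * X) : gequiv x y -> gequiv y x.
Proof. exact: rst_sym. Qed.

Lemma gtrans (X : tpset) (x y z : M * X) : gequiv x y -> gequiv y z -> gequiv x z.
Proof. exact: rst_trans. Qed.

Lemma qdist_lb (X : tpmet R) c : 0 < c -> c <= 1 ->
  (forall x y : X, 0 <= mdist x y /\ (x <> y -> c <= mdist x y)) ->
  forall C D : tcar X, 0 <= qdist C D /\ (C <> D -> c / 2 <= qdist C D).
Proof.
move=> c0 c1 H C D.
have nn : forall x y : X, 0 <= mdist x y by move=> a b; case: (H a b).
case: (proj2_sig C) => x0 ex0; case: (proj2_sig D) => y0 ey0.
have ne : [set r | exists (x y : M * X) (s : seq ((M * X) * (M * X))),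
         [/\ sval C x, sval D y, qchain x y s & r = qcost s]] !=set0.
  exists (qcost [:: (x0, y0)]), x0, y0, [:: (x0, y0)].
  by rewrite ex0 ey0; split => //=; try split; apply: rst_refl.
split.
  apply: lb_le_inf => // r [x [y [s [_ _ _ ->]]]]; exact: qcost_ge0.
move=> CD; apply: lb_le_inf => // r [x [y [s [hx hy hs ->]]]].
case: (chain_lb c0 c1 H hs) => // gxy.
exfalso; apply: CD; apply: tcar_eq; rewrite ex0 ey0.
move: hx hy; rewrite ex0 ey0 /cls /= => hx hy.
apply/funext => z; apply/propext; split => h.
  exact: (gtrans hy (gtrans (gequiv_sym gxy) (gtrans (gequiv_sym hx) h))).
exact: (gtrans hx (gtrans gxy (gtrans (gequiv_sym hy) h))).
Qed.

Lemma Fn_lb (n : nat) : exists c : R, [/\ 0 < c, c <= 1 &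
  forall x y : Fn R n, 0 <= mdist x y /\ (x <> y -> c <= mdist x y)].
Proof.
elim: n => [|n [c [c0 c1 H]]].
  exists 1; split => // x y; rewrite /= /ddisc; case: pselect => /= e.
    by split => //.
  by split => // _; rewrite lexx.
exists (c / 2); split; [lra | lra |].
move=> x y; exact: (qdist_lb c0 c1 H x y).
Qed.

End Helpers.

Theorem mainTheorem2 (R : realType) (G : tpset) (g : forall n : nat, Fn R n -> G) :
  (* (G, g) is the colimit of the initial chain in Set_3 *)
  is_set3 G ->
  (forall n, hom3 (g n)) ->
  (forall n (x : Fn R n), g n x = g n.+1 (chain n x)) ->
  (forall (Y : tpset) (h : forall n : nat, Fn R n -> Y),
     is_set3 Y -> (forall n, hom3 (h n)) ->
     (forall n (x : Fn R n), h n x = h n.+1 (chain n x)) ->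
     exists u : G -> Y, [/\ hom3 u, (forall n (x : Fn R n), u (g n x) = h n x) &
       forall u' : G -> Y, hom3 u' -> (forall n (x : Fn R n), u' (g n x) = h n x) ->
         forall z, u' z = u z]) ->
  (* then (G, d_disc) with the same maps g is the colimit in Met_3^C *)
  [/\ is_met3 (discmet R G),
      (forall n, @mcont R (Fn R n) (discmet R G) (g n)) &
      forall (Y : tpmet R) (h : forall n : nat, Fn R n -> Y),
        is_met3 Y -> (forall n, hom3 (h n) /\ @mcont R (Fn R n) Y (h n)) ->
        (forall n (x : Fn R n), h n x = h n.+1 (chain n x)) ->
        exists u : discmet R G -> Y,
          [/\ hom3 u, @mcont R (discmet R G) Y u,
              (forall n (x : Fn R n), u (g n x) = h n x) &
              forall u' : discmet R G -> Y, hom3 u' -> @mcont R (discmet R G) Y u' ->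
                (forall n (x : Fn R n), u' (g n x) = h n x) -> forall z, u' z = u z]].
Proof.
Proof.
move=> G3 gh gc univ; split.
- split.
  + move=> x y; rewrite /= /ddisc; case: pselect => /= e; split => //.
    by move/eqP; rewrite oner_eq0.
  + move=> x y; rewrite /= /ddisc; case: pselect => /= e; case: pselect => /= e' //.
    * by case: e'.
    * by case: e.
  + move=> x y z; rewrite /= /ddisc.
    case: pselect => /= e; case: pselect => /= e'; case: pselect => /= e'' //; try lra.
    by subst; case: e.
  + move=> x y; rewrite /= /ddisc; case: pselect => /= e //; lra.
  + case: G3 => h1 h2 h3; rewrite /= /ddisc.
    by split; case: pselect.
- move=> n x e e0; have [c [c0 c1 H]] := Fn_lb R n; exists c => // y dy.
  have xy : x = y.
    case: (pselect (x = y)) => // ne; have hc' := (H x y).2 ne.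
    by move: dy; rewrite ltNge hc'.
  by subst y; rewrite /= /ddisc; case: pselect.
move=> Y h Y3 hh hc.
have [d0 _ _ _ [h1 h2 h3]] := Y3.
have Ys : is_set3 Y.
  split => ex.
  - by have := (d0 _ _).2 ex; rewrite h1 => /eqP; rewrite oner_eq0.
  - by have := (d0 _ _).2 ex; rewrite h2 => /eqP; rewrite oner_eq0.
  - by have := (d0 _ _).2 ex; rewrite h3 => /eqP; rewrite oner_eq0.
have [u [uh ug uu]] := univ (mset Y) h Ys (fun n => (hh n).1) hc.
exists u; split => //.
  move=> x e e0; exists 1 => // y; rewrite /= /ddisc; case: pselect => /= ex.
    by subst y; rewrite ((d0 _ _).2 erefl).
  by rewrite ltxx.
by move=> u' u'h _ u'g; exact: uu.
Qed.
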